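(* Let $A\in\mathbb{R}^{m\times n}$, $b\in\mathbb{R}^m$ with $\{x:Ax=b\}\neq\emptyset$, and take $\delta=0$. Let $x^*$ be an optimal solution of $\min\{\|x\|_0: Ax=b\}$, let $I^*=\{i: x^*_i\neq0\}$ and $\bar I^*=\{1,\dots,n\}\setminus I^*$. Say that a vector $v\in\mathbb{R}^n_+$ satisfies the null space condition (NSC) if $$\langle v_{I^*},|y_{I^*}|\rangle<\langle v_{\bar I^*},|y_{\bar I^*}|\rangle\quad\text{for every } 0\neq y\in\operatorname{Null}(A).$$ Consider the iterates $x^k,v^k$ generated by the exact penalty decomposition method described in the context (with $\delta=0$). Assume $v^k$ satisfies (NSC) for some nonnegative integer $k$. Then $x^{k+1}=x^*$. If, in addition, $v^{k+1}$ also satisfies (NSC), then $v^{k+l}$ satisfies (NSC) for all $l\ge2$ and $x^{k+l+1}=x^*$ for all $l\ge1$. Consequently, if $v^0$ satisfies (NSC), then $x^k=x^*$ for all $k\ge1$.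
   Context: Exact penalty decomposition method: (S.0) Given a tolerance $\epsilon>0$ and a ratio $\sigma>1$, choose $\rho_0>0$, set $v^0=e$ (the all-ones vector in $\mathbb{R}^n$) and $k:=0$. (S.1) Choose $x^{k+1}\in\arg\min_{x\in\mathbb{R}^n}\{\langle v^k,|x|\rangle:\ \|Ax-b\|\le\delta\}$. (S.2) For each $i$, set $v^{k+1}_i=0$ if $|x^{k+1}_i|>1/\rho_k$ and $v^{k+1}_i=1$ otherwise. (S.3) If $\langle v^{k+1},|x^{k+1}|\rangle\le\epsilon$, stop; otherwise go to (S.4). (S.4) Set $\rho_{k+1}=\sigma\rho_k$, $k:=k+1$, and go to (S.1). Here $\|x\|_0$ is the number of nonzero entries of $x$, $|x|$ the componentwise absolute value, $x_I$ the subvector of $x$ indexed by $I$, and $\operatorname{Null}(A)$ the null space of $A$. Statements about iterates refer to the iterates generated by the method. *)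

(* Defs.v *)
From mathcomp Require Import all_boot all_order all_algebra.
Set Implicit Arguments. Unset Strict Implicit. Unset Printing Implicit Defensive.
Import Order.TTheory GRing.Theory Num.Theory.
Local Open Scope ring_scope.

(* Vectors of R^n are column vectors 'cV[R]_n; x i 0 is the i-th entry. *)

Definition l0norm (R : realFieldType) (n : nat) (x : 'cV[R]_n) : nat :=
  #|[set i : 'I_n | x i 0 != 0]|.

Definition wl1 (R : realFieldType) (n : nat) (v x : 'cV[R]_n) : R :=
  \sum_(i < n) v i 0 * `|x i 0|.

Definition supp (R : realFieldType) (n : nat) (x : 'cV[R]_n) : {set 'I_n} :=
  [set i : 'I_n | x i 0 != 0].

Definition l0_optimal (R : realFieldType) (m n : nat)
    (A : 'M[R]_(m, n)) (b : 'cV[R]_m) (xs : 'cV[R]_n) : Prop :=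
  A *m xs = b /\ forall z : 'cV[R]_n, A *m z = b -> (l0norm xs <= l0norm z)%N.

Definition NSC (R : realFieldType) (m n : nat)
    (A : 'M[R]_(m, n)) (xs : 'cV[R]_n) (v : 'cV[R]_n) : Prop :=
  (forall i, 0 <= v i 0) /\
  forall y : 'cV[R]_n, y != 0 -> A *m y = 0 ->
    \sum_(i in supp xs) v i 0 * `|y i 0| <
    \sum_(i in ~: supp xs) v i 0 * `|y i 0|.

(* Iterates of the exact penalty decomposition method with delta = 0
   (steps S.0, S.1, S.2, S.4; the stopping test S.3 is not modelled). *)
Definition EPD_iterates (R : realFieldType) (m n : nat)
    (A : 'M[R]_(m, n)) (b : 'cV[R]_m) (sigma : R)
    (rho : nat -> R) (x v : nat -> 'cV[R]_n) : Prop :=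
  [/\ 0 < rho 0%N,
      v 0%N = const_mx 1,
      forall k, rho k.+1 = sigma * rho k,
      forall k, A *m x k.+1 = b /\
        (forall z : 'cV[R]_n, A *m z = b -> wl1 (v k) (x k.+1) <= wl1 (v k) z)
    & forall k (i : 'I_n),
        v k.+1 i 0 = (if (rho k)^-1 < `|x k.+1 i 0| then 0 else 1)].

(* Main.v *)
Require Import Defs.
From mathcomp Require Import all_boot all_order all_algebra.
From mathcomp Require Import lra.
Import Order.TTheory GRing.Theory Num.Theory.
Local Open Scope ring_scope.

Lemma split_sum (R : realFieldType) (n : nat) (F : 'I_n -> R) (S : {set 'I_n}) :
  \sum_(i < n) F i = \sum_(i in S) F i + \sum_(i in ~: S) F i.
Proof.
rewrite (bigID (mem S)) /=; congr (_ + _); apply: eq_bigl => i; by rewrite in_setC.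
Qed.

Lemma nsc_opt (R : realFieldType) (m n : nat) (A : 'M[R]_(m, n)) (b : 'cV[R]_m)
  (v x xs : 'cV[R]_n) :
  NSC A xs v -> A *m xs = b -> A *m x = b -> wl1 v x <= wl1 v xs -> x = xs.
Proof.
move=> [v0 H] Axs Ax Hle. apply/eqP; rewrite -subr_eq0; apply/negPn/negP => hy.
have Ay : A *m (x - xs) = 0 by rewrite mulmxBr Ax Axs subrr.
have := H _ hy Ay. set y := x - xs => Hy.
have key: \sum_(i in supp xs) v i 0 * `|xs i 0| - \sum_(i in supp xs) v i 0 * `|y i 0|
   + \sum_(i in ~: supp xs) v i 0 * `|y i 0| <= wl1 v x.
  rewrite /wl1 (split_sum _ _ _ (supp xs)) -sumrB. apply: lerD.
    apply: ler_sum => i _. rewrite -mulrBr. apply: ler_wpM2l => //.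
    have -> : x i 0 = xs i 0 + y i 0 by rewrite /y !mxE addrCA subrr addr0.
    exact: lerB_normD.
  rewrite le_eqVlt; apply/orP; left; apply/eqP; apply: eq_bigr => i.
  rewrite in_setC inE negbK => /eqP hi. by rewrite /y !mxE hi subr0.
have ws: wl1 v xs = \sum_(i in supp xs) v i 0 * `|xs i 0|.
  rewrite /wl1 (split_sum _ _ _ (supp xs)) [X in _ + X]big1 ?addr0 // => i.
  by rewrite in_setC inE negbK => /eqP ->; rewrite normr0 mulr0.
move: key Hle Hy; rewrite ws => K1 K2 K3. clearbody y. clear -K1 K2 K3. lra.
Qed.

Lemma nsc_mono (R : realFieldType) (m n : nat) (A : 'M[R]_(m, n)) (xs v w : 'cV[R]_n) :
  NSC A xs v -> (forall i, 0 <= w i 0) ->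
  (forall i, i \in supp xs -> w i 0 <= v i 0) ->
  (forall i, i \notin supp xs -> w i 0 = v i 0) -> NSC A xs w.
Proof.
move=> [v0 H] w0 Hle Heq; split=> // y hy Ay.
apply: (le_lt_trans _ (lt_le_trans (H y hy Ay) _)).
  apply: ler_sum => i hi. by apply: ler_wpM2r => //; apply: Hle.
rewrite le_eqVlt; apply/orP; left; apply/eqP; apply: eq_bigr => i.
by rewrite in_setC => /Heq ->.
Qed.

Theorem theorem3p3 (R : realFieldType) (m n : nat)
    (A : 'M[R]_(m, n)) (b : 'cV[R]_m) (sigma : R)
    (rho : nat -> R) (x v : nat -> 'cV[R]_n) (xs : 'cV[R]_n) :
  (exists x0 : 'cV[R]_n, A *m x0 = b) ->
  1 < sigma ->
  l0_optimal A b xs ->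
  EPD_iterates A b sigma rho x v ->
  (forall k : nat,
     NSC A xs (v k) ->
       x k.+1 = xs /\
       (NSC A xs (v k.+1) ->
          (forall l : nat, (2 <= l)%N -> NSC A xs (v (k + l)%N)) /\
          (forall l : nat, (1 <= l)%N -> x (k + l).+1 = xs))) /\
  (NSC A xs (v 0%N) -> forall k : nat, (1 <= k)%N -> x k = xs).
Proof.
move=> _ hs [Axs _] [r0 v0 rS Hx Hv].
have rpos : forall k, 0 < rho k.
  elim=> // k IH; rewrite rS; apply: mulr_gt0 => //; exact: lt_trans ltr01 hs.
have vnn : forall k i, 0 <= v k i 0.
  case=> [|k] i; first by rewrite v0 mxE.
  by rewrite Hv; case: ifP.
have xeq : forall k, NSC A xs (v k) -> x k.+1 = xs.
  move=> k Hk; have [Ax Hm] := Hx k; exact: nsc_opt Hk Axs Ax (Hm _ Axs).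
have vout : forall k i, x k.+1 = xs -> i \notin supp xs -> v k.+1 i 0 = 1.
  move=> k i xk; rewrite inE negbK => /eqP hi.
  rewrite Hv xk hi normr0 ltNge ltW //; by rewrite invr_gt0.
have step : forall k, NSC A xs (v k.+1) -> x k.+1 = xs -> x k.+2 = xs ->
    NSC A xs (v k.+2).
  move=> k Hk x1 x2; apply: nsc_mono Hk _ _ _ => // i hi.
    rewrite !Hv x1 x2. case: ifP => h1; case: ifP => h2 //.
    exfalso; move: h1; rewrite (lt_trans _ h2) //.
    rewrite ltf_pV2 ?posrE ?rpos // rS; have hk := rpos k; clear -hk hs; nra.
  by rewrite !vout.
have part1 : forall k : nat,
     NSC A xs (v k) ->
       x k.+1 = xs /\
       (NSC A xs (v k.+1) ->
          (forall l : nat, (2 <= l)%N -> NSC A xs (v (k + l)%N)) /\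
          (forall l : nat, (1 <= l)%N -> x (k + l).+1 = xs)).
  move=> k Hk; have xk := xeq k Hk; split=> // Hk1.
  have gen : forall l, (1 <= l)%N -> NSC A xs (v (k + l)%N) /\ x (k + l)%N = xs.
    elim=> // l IH _; case: l IH => [|l] IH; first by rewrite addn1.
    have [H1 H2] := IH isT.
    have x2 : x (k + l.+2)%N = xs by rewrite addnS; exact: xeq.
    split=> //; move: H1 H2 x2; rewrite !addnS => H1 H2 x2; exact: step.
  split=> l hl.
    by case: (gen l (leq_trans _ hl)).
  by apply: xeq; case: (gen l hl).
split=> // H0 k hk.
have x1 := xeq 0%N H0.
have N1 : NSC A xs (v 1%N).
  apply: nsc_mono H0 _ _ _ => // i hi.
    by rewrite v0 mxE Hv; case: ifP.
  by rewrite v0 mxE vout.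
have [_ H2] := part1 0%N H0; have [_ H3] := H2 N1.
case: k hk => // [[|l]] _ //.
by have := H3 l.+1 isT; rewrite add0n.
Qed.
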